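(* For every real number $k>0$ and all integers $0<m_1<m_2<\cdots<m_n$, the $n\times n$ matrix $M=\big((k+i)^{m_j}-(k+i-1)^{m_j}\big)_{i,j=1}^n$ has positive determinant. *)

(* Defs.v *)
From mathcomp Require Import all_boot all_order all_algebra.
From mathcomp Require Import reals.
Set Implicit Arguments. Unset Strict Implicit. Unset Printing Implicit Defensive.

(* Main.v *)
Require Import Defs.
From mathcomp Require Import all_boot all_order all_algebra.
From mathcomp Require Import reals polyrcf zify.
Import Order.TTheory GRing.Theory Num.Theory.
Local Open Scope ring_scope.

Lemma fin_choice (T : Type) (x0 : T) (P : nat -> T -> Prop) s :
  (forall i, (i < s)%N -> exists x, P i x) ->
  exists f : nat -> T, forall i, (i < s)%N -> P i (f i).
Proof.
elim: s => [|s IH] H; first by exists (fun _ => x0).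
have [f Hf] := IH (fun i hi => H i (ltnW hi)).
have [x Hx] := H s (ltnSn s).
exists (fun i => if i == s then x else f i) => i hi.
case: eqP => [->//|/eqP ne]; apply: Hf; lia.
Qed.

Section RB.
Variable R : rcfType.

Lemma RB s : forall (c : nat -> R) (e : nat -> nat) (r : nat -> R),
  (forall i j, (i < j)%N -> (j < s)%N -> (e i < e j)%N) ->
  (forall i, (i < s)%N -> 0 < r i) ->
  (forall i, (i.+1 < s)%N -> r i < r i.+1) ->
  (forall i, (i < s)%N -> (\sum_(j < s) c j *: 'X^(e j)).[r i] = 0) ->
  forall j, (j < s)%N -> c j = 0.
Proof.
elim: s => [|s IH] c e r he hr0 hr hroot j hj //.
pose q : {poly R} := \sum_(j < s.+1) c j *: 'X^(e j - e 0%N).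
have hpq : \sum_(j < s.+1) c j *: 'X^(e j) = 'X^(e 0%N) * q.
  rewrite /q mulr_sumr; apply: eq_bigr => i _.
  rewrite -scalerAr -exprD subnKC //.
  case: (posnP i) => [->//|hi]; apply: ltnW; apply: he => //.
have hq : forall i, (i < s.+1)%N -> q.[r i] = 0.
  move=> i hi; have := hroot i hi; rewrite hpq hornerM hornerXn => /eqP.
  by rewrite mulf_eq0 expf_eq0 (gt_eqF (hr0 i hi)) andbF /= => /eqP.
have hdq : q^`() = \sum_(j < s) (c j.+1 *+ (e j.+1 - e 0%N)) *: 'X^((e j.+1 - e 0%N).-1).
  rewrite /q raddf_sum big_ord_recl /= derivZ subnn derivXn mulr0n scaler0 add0r.
  apply: eq_bigr => i _; by rewrite derivZ derivXn /= /bump /= add1n -scalerMnr scalerMnl.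
have [z hz] : exists z : nat -> R, forall i, (i < s)%N ->
    (z i \in `](r i), (r i.+1)[) /\ q^`().[z i] = 0.
  apply: (@fin_choice R 0 (fun i z => (z \in `](r i), (r i.+1)[) /\ q^`().[z] = 0)).
  move=> i hi; have [z hz1 hz2] := poly_rolle (hr i hi)
     (etrans (hq i (ltnW hi)) (esym (hq i.+1 hi))).
  by exists z.
have hc : forall j, (j < s)%N -> c j.+1 = 0.
  move=> i hi.
  suff /eqP : c i.+1 *+ (e i.+1 - e 0%N) = 0.
    rewrite mulrn_eq0 => /orP[|/eqP//].
    move=> /eqP h0; exfalso; have := he 0%N i.+1 isT hi. lia.
  apply: (IH (fun j => c j.+1 *+ (e j.+1 - e 0%N)) (fun j => (e j.+1 - e 0%N).-1) z) => //.
  - move=> a b hab hb; have := he 0%N a.+1 isT (ltn_trans hab hb); have := he a.+1 b.+1 hab hb. lia.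
  - move=> a ha; have [/andP[h1 h2] _] := hz a ha.
    by apply: lt_trans h1; apply: hr0; lia.
  - move=> a ha; have [/andP[_ h1] _] := hz a (ltnW ha).
    have [/andP[h2 _] _] := hz a.+1 ha.
    exact: lt_trans h1 h2.
  - by move=> a ha; rewrite -hdq; case: (hz a ha).
case: j hj => [_|j hj]; last by apply: hc.
have := hq 0%N isT; rewrite /q horner_sum big_ord_recl big1 /=.
  rewrite addr0 hornerZ subnn hornerXn expr0 mulr1 //.
by move=> i _; rewrite hc // hornerZ mul0r.
Qed.

Definition VM n (x : nat -> R) (e : nat -> nat) : 'M[R]_n :=
  \matrix_(i < n, j < n) x i ^+ e j.

Lemma GV n : forall (x : nat -> R) (e : nat -> nat),
  (forall i j, (i < j)%N -> (j < n)%N -> x i < x j) ->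
  (forall i, (i < n)%N -> 0 < x i) ->
  (forall i j, (i < j)%N -> (j < n)%N -> (e i < e j)%N) ->
  0 < \det (VM n x e).
Proof.
elim: n => [|n IH] x e hx hx0 he; first by rewrite det_mx00.
pose y t i := if i == n then t else x i.
pose A t := VM n.+1 (y t) e.
pose cn j := if (j < n.+1)%N then cofactor (A 0) ord_max (inord j) else 0.
pose p : {poly R} := \sum_(j < n.+1) cn j *: 'X^(e j).
have hcof : forall t (j : 'I_n.+1), cofactor (A t) ord_max j = cofactor (A 0) ord_max j.
  move=> t j; rewrite /cofactor; congr (_ * _); congr (\det _).
  apply/matrixP => a b; rewrite !mxE /y lift_max /= (ltn_eqF (ltn_ord a)) //.
have hp : forall t, p.[t] = \det (A t).
  move=> t; rewrite (expand_det_row _ ord_max) horner_sum; apply: eq_bigr => j _.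
  by rewrite hornerZ hornerXn /cn ltn_ord inord_val hcof !mxE /y /= eqxx mulrC.
have hcn : 0 < cn n.
  rewrite /cn ltnSn /cofactor.
  have -> : (inord n : 'I_n.+1) = ord_max by apply/val_inj; rewrite /= inordK.
  rewrite /= -signr_odd addnn odd_double expr0 mul1r.
  have -> : row' ord_max (col' ord_max (A 0)) = VM n x e.
    apply/matrixP => a b; rewrite !mxE /y !lift_max /= (ltn_eqF (ltn_ord a)) //.
  apply: IH => //.
  - move=> i j hij hj; apply: hx => //; exact: ltnW.
  - move=> i hi; apply: hx0; exact: ltnW.
  - move=> i j hij hj; apply: he => //; exact: ltnW.
have hroots : forall i, (i < n)%N -> p.[x i] = 0.
  move=> i hi; rewrite hp.
  have hi' : (i < n.+1)%N by rewrite ltnS ltnW.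
  apply: (@determinant_alternate _ _ _ (inord i) ord_max).
    by rewrite -val_eqE /= inordK // neq_ltn hi.
  by move=> j; rewrite !mxE /y /= inordK // (ltn_eqF hi) eqxx.
have key : forall z, 0 < z -> (forall i, (i < n)%N -> x i < z) -> p.[z] = 0 -> False.
  move=> z hz hxz hpz.
  have H0 : cn n = 0.
    apply: (@RB n.+1 cn e (y z) he _ _ _ n (ltnSn n)).
    - move=> i hi; rewrite /y; case: eqP => // /eqP ne; exact: (hx0 i hi).
    - move=> i hi; rewrite /y; case: eqP => [e1 | /eqP ne].
        by exfalso; move: hi; rewrite e1 ltnn.
      case: eqP => [e1|/eqP ne2]; first by apply: hxz; rewrite -e1.
      apply: hx => //; rewrite ltn_neqAle ne2 -ltnS //.
    - move=> i hi; rewrite /y; case: eqP => [_|/eqP ne]; first exact: hpz. apply: hroots.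
      by rewrite ltn_neqAle ne -ltnS.
  by rewrite H0 ltxx in hcn.
have hA : A (x n) = VM n.+1 x e.
  by apply/matrixP => a b; rewrite !mxE /y; case: eqP => [->|].
rewrite -hA -hp.
case: (ltrgtP 0 p.[x n]) => // h.
- have hlc : lead_coef p = cn n.
    rewrite /p big_ord_recr /= addrC lead_coefDl.
      by rewrite lead_coefZ lead_coefXn mulr1.
    rewrite size_scale ?gt_eqF // size_polyXn ltnS.
    apply: leq_trans (size_sum _ _ _) _; apply/bigmax_leqP => j _.
    apply: leq_trans (size_scale_leq _ _) _; rewrite size_polyXn; exact: he.
  have hlc0 : 0 < lead_coef p by rewrite hlc.
  have [N hN] := poly_pinfty_gt_lc hlc0.
  pose T := Num.max N (x n) + 1.
  have hM1 : x n <= Num.max N (x n) by rewrite le_max lexx orbT.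
  have hM2 : N <= Num.max N (x n) by rewrite le_max lexx.
  have hT1 : x n < T by apply: (le_lt_trans hM1); rewrite /T ltrDl ltr01.
  have hT2 : N <= T by apply: (le_trans hM2); rewrite /T lerDl ler01.
  have hpT : 0 < p.[T] := lt_le_trans hlc0 (hN T hT2).
  have hneg : p.[x n] * p.[T] < 0 by rewrite pmulr_llt0.
  have [z hz hr] := poly_ivtoo (ltW hT1) hneg.
  move: hz; rewrite in_itv /= => /andP[hz1 _].
  exfalso; apply: (key z).
  + exact: lt_trans (hx0 n (ltnSn n)) hz1.
  + by move=> i hi; apply: lt_trans hz1; apply: hx.
  + exact/rootP.
- exfalso; apply: (key (x n)) => //; first exact: hx0.
  by move=> i hi; apply: hx.
Qed.

Lemma sum_delta N (i : nat) (g : nat -> R) : (i < N)%N ->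
  \sum_(l < N) (i == l :> nat)%:R * g l = g i.
Proof.
move=> hi; rewrite (bigD1 (Ordinal hi)) //= eqxx mul1r big1 ?addr0 // => l hl.
suff -> : (i == l :> nat) = false by rewrite mul0r.
apply/negbTE; apply: contra hl => /eqP hil; apply/eqP/val_inj => /=; by rewrite hil.
Qed.

Lemma sum_delta2 N (i : nat) (g : nat -> R) : (i < N)%N ->
  \sum_(l < N) (i == l.+1 :> nat)%:R * g l =
    (if i is i'.+1 then g i' else 0).
Proof.
case: i => [|i] hi; first by rewrite big1 // => l _; rewrite mul0r.
under eq_bigr do rewrite eqSS.
apply: sum_delta; exact: ltnW.
Qed.

End RB.

Theorem claim4 (R : realType) (n : nat) (k : R) (m : 'I_n -> nat)
  (hk : 0 < k)
  (hm0 : forall j : 'I_n, (0 < m j)%N)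
  (hminc : forall i j : 'I_n, (i < j)%N -> (m i < m j)%N) :
  0 < \det (\matrix_(i < n, j < n)
              ((k + (i.+1)%:R) ^+ m j - (k + i%:R) ^+ m j)).
Proof.
case: n m hm0 hminc => [|N] m hm0 hminc; first by rewrite det_mx00.
pose x (i : nat) : R := k + i%:R.
pose e (j : nat) : nat := if j is j'.+1 then m (inord j') else 0%N.
have hGV : 0 < \det (@VM R N.+2 x e).
  apply: GV.
  - by move=> i j hij _; rewrite /x ltrD2l ltr_nat.
  - by move=> i _; rewrite /x ltr_wpDr.
  - move=> i j hij hj; case: j hij hj => [//|j] hij hj.
    case: i hij => [|i] hij /=; first exact: hm0.
    have hj' : (j < N.+1)%N by rewrite -ltnS.
    have hi' : (i < N.+1)%N by apply: ltn_trans hj'; rewrite -ltnS.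
    by apply: hminc; rewrite !inordK.
pose L : 'M[R]_N.+2 := \matrix_(i, l) ((i == l :> nat)%:R - (i == l.+1 :> nat)%:R).
have hL : \det L = 1.
  rewrite det_trig.
    rewrite big1 // => i _; rewrite mxE eqxx (ltn_eqF (ltnSn i)) subr0 //.
  apply/is_trig_mxP => i j hij; rewrite mxE (ltn_eqF hij).
  by rewrite (ltn_eqF (ltn_trans hij (ltnSn j))) subr0.
have [D hDdef] : {D : 'M[R]_N.+2 | D = L *m @VM R N.+2 x e} by exists (L *m @VM R N.+2 x e).
have hdetD : \det D = \det (@VM R N.+2 x e) by rewrite hDdef det_mulmx hL mul1r.
have hD : forall i j : 'I_N.+2, D i j =
    x i ^+ e j - (if (i : nat) is i'.+1 then x i' ^+ e j else 0).
  move=> i j; rewrite hDdef !mxE.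
  under eq_bigr do rewrite !mxE mulrBl.
  by rewrite sumrB (@sum_delta R _ _ (fun l => x l ^+ e j) (ltn_ord i))
    (@sum_delta2 R _ _ (fun l => x l ^+ e j) (ltn_ord i)).
rewrite -hdetD in hGV.
move: hGV; rewrite (expand_det_col D ord0) big_ord_recl big1 ?addr0; last first.
  by move=> i _; rewrite hD /= /e expr0 subrr mul0r.
rewrite hD /= /e expr0 subr0 mul1r /cofactor /= expr0 mul1r.
congr (0 < \det _); apply/matrixP => a b; rewrite !mxE hD /= /x inord_val //.
Qed.
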